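(* Let $G$ be a finite group and $\xi$ a linear character of $G$. With $SG_2$, $HG_1$ and the characters $\xi\otimes1$, $\xi\otimes\mathrm{sgn}$ of $HG_1$ as in the context, we have (1) $$(\xi\otimes1)\uparrow_{HG_1}^{SG_2}\cong\bigoplus_{\substack{\chi=\xi\otimes\bar\chi\\ \nu_2^\xi(\chi)=1}}S^{(2)}(\chi)\ \oplus\bigoplus_{\substack{\chi=\xi\otimes\bar\chi\\ \nu_2^\xi(\chi)=-1}}S^{(1^2)}(\chi)\ \oplus\bigoplus_{\{\chi,\xi\otimes\bar\chi\},\ \chi\neq\xi\otimes\bar\chi}\big(S^{(1)}(\chi)\otimes S^{(1)}(\xi\otimes\bar\chi)\big)\uparrow_{SG_1\times SG_1}^{SG_2};$$ (2) $$(\xi\otimes\mathrm{sgn})\uparrow_{HG_1}^{SG_2}\cong\bigoplus_{\substack{\chi=\xi\otimes\bar\chi\\ \nu_2^\xi(\chi)=1}}S^{(1^2)}(\chi)\ \oplus\bigoplus_{\substack{\chi=\xi\otimes\bar\chi\\ \nu_2^\xi(\chi)=-1}}S^{(2)}(\chi)\ \oplus\bigoplus_{\{\chi,\xi\otimes\bar\chi\},\ \chi\neq\xi\otimes\bar\chi}\big(S^{(1)}(\chi)\otimes S^{(1)}(\xi\otimes\bar\chi)\big)\uparrow_{SG_1\times SG_1}^{SG_2},$$ where in each case the last sum runs over the unordered pairs $\{\chi,\xi\otimes\bar\chi\}$ of irreducible characters with $\chi\neq\xi\otimes\bar\chi$ (equivalently $\nu_2^\xi(\chi)=0$), each pair taken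 once.
   Context: $G\wr S_m=\{(g_1,\dots,g_m;\sigma)\}$ with multiplication $(g;\sigma)(h;\tau)=(g_1h_{\sigma^{-1}(1)},\dots,g_mh_{\sigma^{-1}(m)};\sigma\tau)$; $SG_m=G\wr S_m$, $SG_1=G$. $HG_1=\{(g,g;\sigma)\}\subset SG_2$, and $(\xi\otimes\varepsilon)(g,g;\sigma)=\xi(g)\varepsilon(\sigma)$ for $\varepsilon\in\{1,\mathrm{sgn}\}$. $\chi$ runs over irreducible characters of $G$, $V_\chi$ affords $\chi$, $\bar\chi$ is the conjugate character and $\xi\otimes\bar\chi:g\mapsto\xi(g)\overline{\chi(g)}$. $\nu_2^\xi(\chi)=\frac{1}{|G|}\sum_{g}\overline{\xi(g)}\chi(g^2)$. For a partition $\lambda$ of $m$, $S^\lambda(\chi)=V_\chi^{\otimes m}\otimes S^\lambda$ ($S^\lambda$ the Specht module) with $(g_1,\dots,g_m;\sigma)(v_1\otimes\cdots\otimes v_m\otimes w)=g_1v_{\sigma^{-1}(1)}\otimes\cdots\otimes g_mv_{\sigma^{-1}(m)}\otimes\sigma w$; so $S^{(1)}(\chi)=V_\chi$. *)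

(* Defs.v *)
From HB Require Import structures.
From mathcomp Require Import all_boot all_order all_algebra all_fingroup all_solvable all_field all_character.
Set Implicit Arguments. Unset Strict Implicit. Unset Printing Implicit Defensive.
Import GRing.Theory Num.Theory.
Local Open Scope ring_scope.

(* The wreath product  G wr S_2.  Its elements are triples (g1, g2, s) *)
(* with s : bool encoding sigma in S_2 (s = true <-> sigma = (1 2)).   *)
(* Multiplication, as in the paper:                                     *)
(*  (g;sigma)(h;tau) = (g1 h_{sigma^-1(1)}, g2 h_{sigma^-1(2)}; sigma tau) *)

Section Wreath.
Variable gT : finGroupType.

Definition wr_type : predArgType := (gT * gT * bool)%type.
HB.instance Definition _ := Finite.on wr_type.

Definition wr_mul (x y : wr_type) : wr_type :=
  let: (g1, g2, s) := x in let: (h1, h2, t) := y in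
  if s then ((g1 * h2)%g, (g2 * h1)%g, s (+) t)
       else ((g1 * h1)%g, (g2 * h2)%g, s (+) t).

Definition wr_one : wr_type := (1%g, 1%g, false).

Definition wr_inv (x : wr_type) : wr_type :=
  let: (g1, g2, s) := x in
  if s then ((g2^-1)%g, (g1^-1)%g, s) else ((g1^-1)%g, (g2^-1)%g, s).

Lemma wr_mulA : associative wr_mul.
Proof.
by move=> [[x1 x2] [|]] [[y1 y2] [|]] [[z1 z2] [|]]; rewrite /= !mulgA.
Qed.

Lemma wr_mul1 : left_id wr_one wr_mul.
Proof. by move=> [[x1 x2] s]; rewrite /= !mul1g. Qed.

Lemma wr_mulV : left_inverse wr_one wr_inv wr_mul.
Proof. by move=> [[x1 x2] [|]]; rewrite /= !mulVg. Qed.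

HB.instance Definition _ := Finite_isGroup.Build wr_type wr_mulA wr_mul1 wr_mulV.

Variable G : {group gT}.

Definition SG2 : {group wr_type} :=
  <<[set x : wr_type | (x.1.1 \in G) && (x.1.2 \in G)]>>%G.

Definition HG1 : {group wr_type} :=
  <<[set x : wr_type | (x.1.1 \in G) && (x.1.1 == x.1.2)]>>%G.

Definition SG1xSG1 : {group wr_type} :=
  <<[set x : wr_type | [&& x.1.1 \in G, x.1.2 \in G & ~~ x.2]]>>%G.

End Wreath.

(* if f is not a class function of H this defaults to 0 (it is only    *)
(* ever applied to genuine class functions below).                      *)
Definition mkCF (aT : finGroupType) (H : {group aT}) (f : aT -> algC) : 'CF(H) :=
  insubd (0 : 'CF(H)) [ffun x => (x \in H)%:R * f x].

Definition sgnb (s : bool) : algC := if s then -1 else 1.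

Definition xi_tensor (gT : finGroupType) (G : {group gT}) (xi : 'CF(G))
    (eps : bool -> algC) : 'CF(HG1 G) :=
  mkCF (HG1 G) (fun x => xi x.1.1 * eps x.2).

(* The character of S^lambda(chi) = V_chi^{(x)2} (x) S^lambda, lambda a  *)
(* partition of 2: S^(2) is the trivial and S^(1^2) the sign module of  *)
(* S_2.  The trace of (g1, g2; sigma) on V_chi (x) V_chi (acting by      *)
(* v1 (x) v2 |-> g1 v_{sigma^-1(1)} (x) g2 v_{sigma^-1(2)}) is           *)
(* chi(g1) chi(g2) if sigma = 1 and chi(g1 g2) if sigma = (1 2).         *)
Definition tensor2_trace (gT : finGroupType) (G : {group gT}) (chi : 'CF(G))
    (x : wr_type gT) : algC :=
  if x.2 then chi (x.1.1 * x.1.2)%g else chi x.1.1 * chi x.1.2.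

Definition S2chi (gT : finGroupType) (G : {group gT}) (chi : 'CF(G)) : 'CF(SG2 G) :=
  mkCF (SG2 G) (tensor2_trace chi).

Definition S11chi (gT : finGroupType) (G : {group gT}) (chi : 'CF(G)) : 'CF(SG2 G) :=
  mkCF (SG2 G) (fun x => tensor2_trace chi x * sgnb x.2).

Definition outer_ind (gT : finGroupType) (G : {group gT}) (chi psi : 'CF(G))
    : 'CF(SG2 G) :=
  'Ind[SG2 G] (mkCF (SG1xSG1 G) (fun x => chi x.1.1 * psi x.1.2)).

Definition nu2 (gT : finGroupType) (G : {group gT}) (xi chi : 'CF(G)) : algC :=
  #|G|%:R^-1 * \sum_(g in G) (xi g)^* * chi (g ^+ 2)%g.

(* Main.v *)
Require Import Defs.
From HB Require Import structures.
From mathcomp Require Import all_boot all_order all_algebra all_fingroup all_solvable all_field all_character.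
From mathcomp Require Import ring zify.
Import GRing.Theory Num.Theory.
Local Open Scope ring_scope.

Module Helpers.
Set Implicit Arguments. Unset Strict Implicit. Unset Printing Implicit Defensive.
Section S.
Variable gT : finGroupType.
Implicit Types a b c d g h : gT.
Lemma wr_mulE a b c d s t :
  (((a,b,s) : wr_type gT) * (c,d,t))%g = if s then ((a*d)%g,(b*c)%g, s (+) t) else ((a*c)%g,(b*d)%g,s(+)t).
Proof. reflexivity. Qed.
Lemma wr_invE a b s :
  (((a,b,s) : wr_type gT)^-1)%g = if s then (b^-1, a^-1, s)%g else (a^-1,b^-1,s)%g.
Proof. reflexivity. Qed.
Lemma wr_oneE : (1%g : wr_type gT) = (1%g,1%g,false).
Proof. reflexivity. Qed.
Lemma sum_wr (F : wr_type gT -> algC) :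
  \sum_(y : wr_type gT) F y = \sum_(a : gT) \sum_(b : gT) \sum_(t : bool) F (a,b,t).
Proof.
rewrite pair_bigA /= pair_bigA /=; apply: eq_bigr => -[[a b] t] _ //.
Qed.

Variable G : {group gT}.

Lemma SG2_set : group_set [set x : wr_type gT | (x.1.1 \in G) && (x.1.2 \in G)].
Proof.
apply/group_setP; split; first by rewrite inE /= !group1.
move=> [[a b] s] [[c d] t]; rewrite !inE /= => /andP[Ga Gb] /andP[Gc Gd].
by rewrite wr_mulE; case: s; rewrite /= ?Ga ?Gb ?Gc ?groupM.
Qed.
Lemma mem_SG2 (x : wr_type gT) : (x \in SG2 G) = (x.1.1 \in G) && (x.1.2 \in G).
Proof. by rewrite /SG2 /= gen_set_id ?SG2_set // inE. Qed.

Lemma HG1_set : group_set [set x : wr_type gT | (x.1.1 \in G) && (x.1.1 == x.1.2)].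
Proof.
apply/group_setP; split; first by rewrite inE /= group1 eqxx.
move=> [[a b] s] [[c d] t]; rewrite !inE /= => /andP[Ga /eqP<-] /andP[Gc /eqP<-].
by rewrite wr_mulE; case: s; rewrite /= ?groupM ?eqxx.
Qed.
Lemma mem_HG1 (x : wr_type gT) : (x \in HG1 G) = (x.1.1 \in G) && (x.1.1 == x.1.2).
Proof. by rewrite /HG1 /= gen_set_id ?HG1_set // inE. Qed.

Lemma base_set : group_set [set x : wr_type gT | [&& x.1.1 \in G, x.1.2 \in G & ~~ x.2]].
Proof.
apply/group_setP; split; first by rewrite inE /= !group1.
move=> [[a b] s] [[c d] t]; rewrite !inE /= => /and3P[Ga Gb /negbTE->] /and3P[Gc Gd /negbTE->].
by rewrite /= !groupM.
Qed.
Lemma mem_base (x : wr_type gT) : (x \in SG1xSG1 G) = [&& x.1.1 \in G, x.1.2 \in G & ~~ x.2].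
Proof. by rewrite /SG1xSG1 /= gen_set_id ?base_set // inE. Qed.

Lemma sHG1 : HG1 G \subset SG2 G.
Proof. by apply/subsetP=> x; rewrite mem_HG1 mem_SG2 => /andP[Gx /eqP<-]; rewrite Gx. Qed.
Lemma sbase : SG1xSG1 G \subset SG2 G.
Proof. by apply/subsetP=> x; rewrite mem_base mem_SG2 => /and3P[->->]. Qed.

Lemma sum_SG2 (F : wr_type gT -> algC) :
  \sum_(y in SG2 G) F y = \sum_(a in G) \sum_(b in G) (F (a,b,false) + F (a,b,true)).
Proof.
rewrite big_mkcond sum_wr /= [RHS]big_mkcond; apply: eq_bigr => a _.
have [Ga|nGa] := boolP (a \in G); last first.
  by rewrite big1 // => b _; rewrite big_bool !mem_SG2 /= (negbTE nGa) addr0.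
rewrite [RHS]big_mkcond /=; apply: eq_bigr => b _.
by rewrite big_bool /= !mem_SG2 /= Ga; case: (b \in G); rewrite ?addr0 // addrC.
Qed.

Lemma sum_HG1 (F : wr_type gT -> algC) :
  \sum_(y in HG1 G) F y = \sum_(a in G) (F (a,a,false) + F (a,a,true)).
Proof.
rewrite big_mkcond sum_wr /= [RHS]big_mkcond; apply: eq_bigr => a _.
rewrite (bigD1 a) //= [X in _ + X]big1 ?addr0 => [|b nba].
  by rewrite big_bool !mem_HG1 /= eqxx andbT; case: (a \in G); rewrite ?addr0 // addrC.
by rewrite big1 // => t _; rewrite mem_HG1 /= eq_sym (negbTE nba) andbF.
Qed.

Lemma sum_base (F : wr_type gT -> algC) :
  \sum_(y in SG1xSG1 G) F y = \sum_(a in G) \sum_(b in G) F (a,b,false).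
Proof.
rewrite big_mkcond sum_wr /= [RHS]big_mkcond; apply: eq_bigr => a _.
have [Ga|nGa] := boolP (a \in G); last first.
  by rewrite big1 // => b _; rewrite big_bool !mem_base /= (negbTE nGa) addr0.
rewrite [RHS]big_mkcond /=; apply: eq_bigr => b _.
by rewrite big_bool /= !mem_base /= Ga andbT andbF; case: (b \in G); rewrite ?addr0 // add0r.
Qed.

Lemma card_HG1 : #|HG1 G|%:R = 2%:R * #|G|%:R :> algC.
Proof.
rewrite -sum1_card natr_sum sum_HG1 -[#|G|]sum1_card natr_sum mulr_sumr.
by apply: eq_bigr => a _; rewrite mulr1.
Qed.
Lemma card_base : #|SG1xSG1 G|%:R = #|G|%:R * #|G|%:R :> algC.
Proof.
rewrite -sum1_card natr_sum sum_base -[#|G|]sum1_card natr_sum mulr_suml.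
apply: eq_bigr => a _; rewrite mul1r.
by [].
Qed.
End S.
Section Tens.
Variable n : nat.
Definition idx (k : 'I_(n * n)) : 'I_n * 'I_n := enum_val (cast_ord (esym (mxvec_cast n n)) k).
Definition idxinv (p : 'I_n * 'I_n) : 'I_(n * n) := cast_ord (mxvec_cast n n) (enum_rank p).
Lemma idxK : cancel idx idxinv.
Proof. by move=> k; rewrite /idx /idxinv enum_valK cast_ordKV. Qed.
Lemma idxinvK : cancel idxinv idx.
Proof. by move=> p; rewrite /idx /idxinv cast_ordK enum_rankK. Qed.
Lemma idx_inj : injective idx. Proof. exact: can_inj idxK. Qed.

Lemma sum_idx (F : 'I_n * 'I_n -> algC) :
  \sum_(k < n * n) F (idx k) = \sum_(i < n) \sum_(j < n) F (i, j).
Proof.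
rewrite pair_bigA /= (reindex idx) /=; last by exists idxinv => p _; rewrite ?idxK ?idxinvK.
by apply: eq_bigr => k _; case: (idx k).
Qed.

Definition ent (s : bool) (A B : 'M[algC]_n) (p q : 'I_n * 'I_n) : algC :=
  if s then A p.2 q.1 * B p.1 q.2 else A p.1 q.1 * B p.2 q.2.
Definition T s A B : 'M[algC]_(n * n) := \matrix_(k, l) ent s A B (idx k) (idx l).

Lemma T1 : T false 1%:M 1%:M = 1%:M.
Proof.
apply/matrixP => k l; rewrite !mxE /ent -(inj_eq idx_inj).
case: (idx k) => i j; case: (idx l) => p q /=; rewrite !mxE xpair_eqE.
by case: (i == p); case: (j == q); rewrite /= ?mulr1 ?mulr0 ?mul0r.
Qed.

Lemma mulT (s t : bool) (A B C D : 'M[algC]_n) :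
  T s A B *m T t C D =
  if s then (if t then T false (B *m C) (A *m D) else T true (A *m C) (B *m D))
  else (if t then T true (B *m C) (A *m D) else T false (A *m C) (B *m D)).
Proof.
apply/matrixP => k l; rewrite mxE.
under eq_bigr do rewrite !mxE.
rewrite (sum_idx (fun p => ent s A B (idx k) p * ent t C D p (idx l))).
case: s; case: t; rewrite [RHS]mxE /ent; case: (idx k) => i j; case: (idx l) => p q /=; rewrite !mxE.
- rewrite mulr_suml exchange_big; apply: eq_bigr => u _; rewrite mulr_sumr; apply: eq_bigr => v _.
  by ring.
- rewrite mulr_suml; apply: eq_bigr => u _; rewrite mulr_sumr; apply: eq_bigr => v _.
  by ring.
- rewrite mulr_suml exchange_big; apply: eq_bigr => u _; rewrite mulr_sumr; apply: eq_bigr => v _.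
  by ring.
- rewrite mulr_suml; apply: eq_bigr => u _; rewrite mulr_sumr; apply: eq_bigr => v _.
  by ring.
Qed.

Lemma trT s A B : \tr (T s A B) = if s then \tr (B *m A) else \tr A * \tr B.
Proof.
rewrite /mxtrace; under eq_bigr do rewrite mxE.
rewrite (sum_idx (fun p => ent s A B p p)) /ent; case: s => /=.
  apply: eq_bigr => i _; rewrite mxE; apply: eq_bigr => j _; ring.
rewrite mulr_suml; apply: eq_bigr => i _; rewrite mulr_sumr; apply: eq_bigr => j _; ring.
Qed.


End Tens.

Lemma mkCF_eq (aT : finGroupType) (H : {group aT}) (f : aT -> algC) (c : 'CF(H)) :
  (forall x, (x \in H)%:R * f x = c x) -> mkCF H f = c.
Proof.
move=> Hf; rewrite /mkCF.
have -> : [ffun x => (x \in H)%:R * f x] = val c by apply/ffunP => x; rewrite ffunE Hf.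
exact: valKd.
Qed.

Lemma mkCF_E (aT : finGroupType) (H : {group aT}) (f : aT -> algC) :
  {in H &, forall x y, f (x ^ y)%g = f x} ->
  forall x, mkCF H f x = (x \in H)%:R * f x.
Proof.
move=> fJ x.
have cf : is_class_fun <<H>>%g [ffun x => (x \in H)%:R * f x].
  rewrite genGid; apply: intro_class_fun => [y z Hy Hz | y /negbTE->]; last by rewrite mul0r.
  by rewrite groupJ // Hy fJ.
by rewrite /mkCF /fun_of_cfun /= insubdK // ffunE.
Qed.

Section Rep.
Variables (gT : finGroupType) (G : {group gT}) (n : nat) (rG : mx_representation algC G n) (e : bool).

Definition wrr (x : wr_type gT) : 'M[algC]_(n * n) :=
  let: (g1, g2, s) := x in
  (if e && s then -1 else 1) *: (if s then T true (rG g2) (rG g1) else T false (rG g1) (rG g2)).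

Lemma wrr_repr : mx_repr (SG2 G) wrr.
Proof.
split; first by rewrite wr_oneE /= andbF scale1r repr_mx1 T1.
move=> [[a b] s] [[c d] t]; rewrite !mem_SG2 /= => /andP[Ga Gb] /andP[Gc Gd].
rewrite wr_mulE /= -scalemxAl -scalemxAr scalerA.
case: s; case: t; rewrite /= mulT ?repr_mxM //; case: e; rewrite /= ?mulrN ?mulr1 ?mulNr ?opprK // ?scaleN1r ?scale1r.
Qed.

Definition wrR := MxRepresentation wrr_repr.

Lemma wrR_val (x : wr_type gT) : x \in SG2 G ->
  \tr (wrR x) = tensor2_trace (cfRepr rG) x * (if e && x.2 then -1 else 1).
Proof.
case: x => [[a b] s]; rewrite mem_SG2 /= => /andP[Ga Gb].
rewrite /= mxtraceZ mulrC /tensor2_trace /=; congr (_ * _).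
case: s; rewrite trT !cfunE /= ?Ga ?Gb ?groupM // ?repr_mxM // !mulr1n.
Qed.
End Rep.

Lemma S2chi_repr gT (G : {group gT}) n (rG : mx_representation algC G n) :
  S2chi (cfRepr rG) = cfRepr (wrR rG false).
Proof.
apply: mkCF_eq => x; rewrite cfunE.
have [Gx|nGx] := boolP (x \in SG2 G); last by rewrite mul0r mulr0n.
by rewrite wrR_val // mulr1 mul1r mulr1n.
Qed.

Lemma S11chi_repr gT (G : {group gT}) n (rG : mx_representation algC G n) :
  S11chi (cfRepr rG) = cfRepr (wrR rG true).
Proof.
apply: mkCF_eq => x; rewrite cfunE.
have [Gx|nGx] := boolP (x \in SG2 G); last by rewrite mul0r mulr0n.
by rewrite wrR_val // mul1r mulr1n /sgnb; case: x.2.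
Qed.


Section Grp.
Variables (gT : finGroupType) (G : {group gT}).

Lemma sum_mulr (d : gT) (F : gT -> algC) : d \in G ->
  \sum_(g in G) F g = \sum_(g in G) F (g * d)%g.
Proof.
move=> Gd; rewrite (reindex (fun g => g * d)%g) /=; last first.
  by exists (fun g => g * d^-1)%g => g _; rewrite ?mulgK ?mulgKV.
by apply: eq_bigl => g; rewrite groupMr.
Qed.

Lemma sum_mull (d : gT) (F : gT -> algC) : d \in G ->
  \sum_(g in G) F g = \sum_(g in G) F (d * g)%g.
Proof.
move=> Gd; rewrite (reindex (fun g => d * g)%g) /=; last first.
  by exists (fun g => d^-1 * g)%g => g _; rewrite ?mulKg ?mulKVg.
by apply: eq_bigl => g; rewrite groupMl.
Qed.

Lemma sum_conj (d : gT) (F : gT -> algC) : d \in G ->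
  \sum_(g in G) F g = \sum_(g in G) F (g ^ d)%g.
Proof.
move=> Gd; rewrite (reindex (fun g => g ^ d)%g) /=; last first.
  by exists (fun g => g ^ d^-1)%g => g _; rewrite ?conjgK ?conjgKV.
by apply: eq_bigl => g; rewrite groupJr.
Qed.

Lemma cnt_conj (x h : gT) : x \in G ->
  \sum_(a in G) ((x ^ a)%g == h)%:R = (#|'C_G[x]%g|%:R *+ (h \in x ^: G)%g : algC).
Proof.
move=> Gx; have [/imsetP[d Gd ->]|nh] := boolP (h \in x ^: G)%g; last first.
  rewrite mulr0n big1 // => a Ga; case: eqP => // eh.
  by case/negP: nh; rewrite -eh memJ_class.
rewrite mulr1n (sum_mulr _ Gd) /=.
rewrite -sum1_card natr_sum big_mkcond /= [RHS]big_mkcond /=.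
apply: eq_bigr => a _; rewrite conjgM (inj_eq (conjg_inj _)) inE.
case: (a \in G) => //=.
have -> : (x ^ a == x)%g = (a \in 'C[x])%g.
  apply/eqP/cent1P => [/conjg_fixP/commgP C | C]; first exact/commute_sym.
  by apply/conjg_fixP/commgP/commute_sym.
by case: (a \in 'C[x])%g.
Qed.

Lemma sq_eq (u w : gT) : (u == u^-1 * w)%g = (u * u == w)%g.
Proof. by rewrite -(inj_eq (mulgI u)) mulKVg. Qed.

End Grp.

Lemma conj_wr (gT : finGroupType) (g1 g2 a b : gT) s t :
  (((g1,g2,s) : wr_type gT) ^ (a,b,t))%g =
  if s then (if t then ((b^-1*g2*a)%g, (a^-1*g1*b)%g, true) else ((a^-1*g1*b)%g, (b^-1*g2*a)%g, true))
  else (if t then (g2^b, g1^a, false)%g else (g1^a, g2^b, false)%g).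
Proof.
by rewrite conjgE wr_invE; case: s; case: t; rewrite !wr_mulE /= ?conjgE ?mulgA.
Qed.

Definition epsb (e s : bool) : algC := if e && s then -1 else 1.

Section Lin.
Variables (gT : finGroupType) (G : {group gT}) (xi : 'CF(G)) (Lxi : xi \is a linear_char) (e : bool).

Definition lr (x : wr_type gT) : 'M[algC]_1 := (xi x.1.1 * epsb e x.2)%:M.

Lemma lr_repr : mx_repr (HG1 G) lr.
Proof.
split; first by rewrite /lr wr_oneE /= lin_char1 // /epsb andbF mulr1.
move=> [[a b] s] [[c d] t]; rewrite !mem_HG1 /= => /andP[Ga /eqP<-] /andP[Gc /eqP<-].
rewrite /lr wr_mulE -scalar_mxM; congr (_%:M).
case: s; rewrite /= lin_charM // /epsb; case: e; case: t => /=; ring.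
Qed.

Definition lR := MxRepresentation lr_repr.

Lemma xt_repr (eps : bool -> algC) : (forall s, eps s = epsb e s) ->
  xi_tensor xi eps = cfRepr lR.
Proof.
move=> He; apply: mkCF_eq => x; rewrite cfunE /= mxtrace_scalar He.
by case: (x \in HG1 G); rewrite ?mul1r ?mul0r.
Qed.

Lemma xt_E (eps : bool -> algC) : (forall s, eps s = epsb e s) ->
  forall x, xi_tensor xi eps x = (x \in HG1 G)%:R * (xi x.1.1 * eps x.2).
Proof.
move=> He x; rewrite (xt_repr He) cfunE /= mxtrace_scalar He.
by case: (x \in HG1 G); rewrite ?mul1r ?mul0r.
Qed.
End Lin.

Section Ind.
Variables (gT : finGroupType) (G : {group gT}) (xi : 'CF(G)) (Lxi : xi \is a linear_char) (e : bool).
Variables (eps : bool -> algC) (He : forall s, eps s = epsb e s).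

Lemma cardG_neq0 : (#|G|%:R : algC) != 0.
Proof. by rewrite pnatr_eq0 -lt0n cardG_gt0. Qed.

Lemma Ind_base g1 g2 : g1 \in G -> g2 \in G ->
  'Ind[SG2 G] (xi_tensor xi eps) (g1,g2,false) = (#|'C_G[g1]%g|%:R * xi g2) *+ (g1 \in g2 ^: G)%g.
Proof.
move=> G1 G2; rewrite cfIndE ?sHG1 // sum_SG2.
have E : forall a b, a \in G -> b \in G ->
   xi_tensor xi eps (((g1, g2, false) : wr_type gT) ^ (a, b, false))%g + xi_tensor xi eps (((g1, g2, false) : wr_type gT) ^ (a, b, true))%g
   = 2%:R * (((g1 ^ a)%g == (g2 ^ b)%g)%:R * xi g2).
  move=> a b Ga Gb; rewrite !conj_wr !(xt_E Lxi He) !mem_HG1 /= !groupJ // He /epsb andbF mulr1.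
  rewrite eq_sym; case: eqP => [E|_]; last by rewrite !mul0r !mulr0 addr0.
  by rewrite -E cfunJ //=; ring.
rewrite (eq_bigr (fun a => \sum_(b in G) 2%:R * (((g1 ^ a)%g == (g2 ^ b)%g)%:R * xi g2))); last first.
  by move=> a Ga; apply: eq_bigr => b Gb; rewrite E.
rewrite exchange_big /=.
under eq_bigr do rewrite -mulr_sumr -mulr_suml cnt_conj //.
rewrite -mulr_sumr -mulr_suml.
under eq_bigr => b Gb do rewrite class_sym classGidl //.
rewrite sumr_const card_HG1.
case: (g1 \in g2 ^: G)%g; rewrite /= ?mulr1n ?mulr0n ?mul0r ?mulr0 ?mul0rn ?mul0r ?mulr0 // -mulr_natr.
field; exact: cardG_neq0.
Qed.

Lemma Ind_swap g1 g2 : g1 \in G -> g2 \in G ->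
  'Ind[SG2 G] (xi_tensor xi eps) (g1,g2,true) =
    eps true * \sum_(u in G) (((u * u)%g == (g1 * g2)%g)%:R * xi u).
Proof.
move=> G1 G2; rewrite cfIndE ?sHG1 // sum_SG2.
have E : forall a b, a \in G -> b \in G ->
   xi_tensor xi eps (((g1, g2, true) : wr_type gT) ^ (a, b, false))%g
   + xi_tensor xi eps (((g1, g2, true) : wr_type gT) ^ (a, b, true))%g
   = 2%:R * eps true * (((a^-1 * g1 * b)%g == (b^-1 * g2 * a)%g)%:R * xi (a^-1 * g1 * b)%g).
  move=> a b Ga Gb; rewrite !conj_wr !(xt_E Lxi He) !mem_HG1 /= !groupM ?groupV //=.
  rewrite (eq_sym (b^-1 * g2 * a)%g); case: eqP => [E|_]; last by rewrite !mul0r !mulr0 addr0.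
  by rewrite -E /=; ring.
have F : forall a, a \in G ->
   \sum_(b in G) (((a^-1 * g1 * b)%g == (b^-1 * g2 * a)%g)%:R * xi (a^-1 * g1 * b)%g)
   = \sum_(u in G) (((u * u)%g == (g1 * g2)%g)%:R * xi u).
  move=> a Ga; rewrite (sum_mull _ (_ : (g1^-1 * a)%g \in G)) ?groupM ?groupV //.
  rewrite (sum_conj _ Ga); apply: eq_bigr => u Gu.
  have -> : (a^-1 * g1 * (g1^-1 * a * u ^ a))%g = (u ^ a)%g.
    by rewrite !mulgA !mulgK conjgE mulgA.
  have -> : ((g1^-1 * a * u ^ a)^-1 * g2 * a)%g = ((u ^ a)^-1 * (g1 * g2) ^ a)%g.
    by rewrite !invMg !invgK !conjgE !mulgA.
  by rewrite sq_eq -conjMg (inj_eq (conjg_inj _)) cfunJ.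
rewrite (eq_bigr (fun a => 2%:R * eps true * \sum_(u in G) (((u * u)%g == (g1 * g2)%g)%:R * xi u))); last first.
  move=> a Ga; rewrite -(F a Ga) mulr_sumr; apply: eq_bigr => b Gb; exact: E.
rewrite sumr_const card_HG1 -mulr_natr; field; exact: cardG_neq0.
Qed.
End Ind.


Section Vals.
Variables (gT : finGroupType) (G : {group gT}).

Lemma outer_E (chi psi : 'CF(G)) g1 g2 s : g1 \in G -> g2 \in G ->
  outer_ind chi psi (g1, g2, s) = if s then 0 else chi g1 * psi g2 + chi g2 * psi g1.
Proof.
move=> G1 G2.
have cE : forall z, mkCF (SG1xSG1 G) (fun x => chi x.1.1 * psi x.1.2) z
             = (z \in SG1xSG1 G)%:R * (chi z.1.1 * psi z.1.2).
  apply: mkCF_E => -[[p q] t] [[a b] u]; rewrite !mem_base /= => /and3P[Gp Gq /negbTE->] /and3P[Ga Gb /negbTE->].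
  by rewrite conj_wr /= !cfunJ.
rewrite /outer_ind cfIndE ?sbase // sum_SG2 card_base.
have T : forall a b, a \in G -> b \in G ->
  mkCF (SG1xSG1 G) (fun x : wr_type gT => chi x.1.1 * psi x.1.2) (((g1, g2, s) : wr_type gT) ^ (a, b, false))%g +
  mkCF (SG1xSG1 G) (fun x : wr_type gT => chi x.1.1 * psi x.1.2) (((g1, g2, s) : wr_type gT) ^ (a, b, true))%g
  = if s then 0 else chi g1 * psi g2 + chi g2 * psi g1.
  move=> a b Ga Gb; rewrite !cE !conj_wr; case: s; rewrite !mem_base /= ?andbF ?mul0r ?addr0 //.
  by rewrite (groupJ G1 Ga) (groupJ G2 Gb) /= !mul1r !(cfunJ _ _ Ga) !(cfunJ _ _ Gb).
rewrite (eq_bigr (fun a => \sum_(b in G) (if s then 0 else chi g1 * psi g2 + chi g2 * psi g1))); last first.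
  by move=> a Ga; apply: eq_bigr => b Gb; apply: T.
rewrite sumr_const sumr_const -mulrnA -mulr_natr; clear T; case: s; first by rewrite mul0rn mulr0.
field; exact: cardG_neq0.
Qed.

Lemma S2chiE (i : Iirr G) x : x \in SG2 G -> S2chi 'chi_i x = tensor2_trace 'chi_i x.
Proof.
by move=> Gx; rewrite -irrRepr S2chi_repr cfunE Gx mulr1n wrR_val // mulr1.
Qed.

Lemma S11chiE (i : Iirr G) x : x \in SG2 G -> S11chi 'chi_i x = tensor2_trace 'chi_i x * sgnb x.2.
Proof.
by move=> Gx; rewrite -irrRepr S11chi_repr cfunE Gx mulr1n wrR_val.
Qed.

Lemma S2chi_char (i : Iirr G) : S2chi 'chi_i \is a character.
Proof. by rewrite -irrRepr S2chi_repr cfRepr_char. Qed.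
Lemma S11chi_char (i : Iirr G) : S11chi 'chi_i \is a character.
Proof. by rewrite -irrRepr S11chi_repr cfRepr_char. Qed.
End Vals.


Section Main.
Variables (gT : finGroupType) (G : {group gT}) (xi : 'CF(G)) (Hxi : xi \is a linear_char).

Definition jj (i : Iirr G) : Iirr G := cfIirr (xi * ('chi_i)^*%CF).

Lemma chi_jj i : 'chi_(jj i) = xi * ('chi_i)^*%CF.
Proof. by rewrite cfIirrE // mul_lin_irr // cfConjC_irr. Qed.

Lemma xi_conj x : x \in G -> xi x * (xi x)^* = 1.
Proof.
move=> Gx; rewrite -lin_charV_conj // -lin_charM ?groupV // mulgV lin_char1 //.
Qed.

Lemma jjK : involutive jj.
Proof.
move=> i; apply: irr_inj; rewrite !chi_jj; apply/cfunP => x; rewrite !cfunE rmorphM /= conjCK.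
have [Gx|nGx] := boolP (x \in G); first by rewrite mulrA xi_conj // mul1r.
by rewrite !cfun0 // ?mul0r ?mulr0.
Qed.

Lemma A_eq i : ('chi_i == xi * ('chi_i)^*%CF) = (i == jj i).
Proof. by rewrite -chi_jj (inj_eq irr_inj). Qed.

Lemma jj_val i x : 'chi_(jj i) x = xi x * ('chi_i x)^*.
Proof. by rewrite chi_jj !cfunE. Qed.


Lemma nu_facts i : (i != jj i -> nu2 xi 'chi_i = 0) /\ (i == jj i -> nu2 xi 'chi_i = 1 \/ nu2 xi 'chi_i = -1).
Proof.
pose Psi := 'Ind[SG2 G] (xi_tensor xi (fun _ => 1)).
have He : forall s, (fun _ : bool => 1 : algC) s = epsb false s by [].
have Psi_char : Psi \is a character by rewrite /Psi (xt_repr Hxi He) cfInd_char ?cfRepr_char.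
have /natrP[n1 N1] := Cnat_cfdot_char Psi_char (S2chi_char i).
have /natrP[n2 N2] := Cnat_cfdot_char Psi_char (S11chi_char i).
set chi := 'chi_i in N1 N2 *.
set SX := \sum_(a in G) xi a * ((chi a)^* * (chi a)^*).
set SY := \sum_(a in G) xi a * (chi (a*a)%g)^*.
have E1 : '[Psi, S2chi chi] = (2%:R * #|G|%:R)^-1 * (SX + SY).
  rewrite -Frobenius_reciprocity cfdotE card_HG1 sum_HG1 -big_split /=; congr (_ * _).
  apply: eq_bigr => a Ga.
  rewrite !(xt_E Hxi He) !cfResE ?sHG1 ?mem_HG1 /= ?Ga ?eqxx // !S2chiE ?mem_SG2 /= ?Ga //.
  by rewrite /tensor2_trace /= !mul1r !mulr1 rmorphM.
have E2 : '[Psi, S11chi chi] = (2%:R * #|G|%:R)^-1 * (SX - SY).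
  rewrite -Frobenius_reciprocity cfdotE card_HG1 sum_HG1 -sumrN -big_split /=; congr (_ * _).
  apply: eq_bigr => a Ga.
  rewrite !(xt_E Hxi He) !cfResE ?sHG1 ?mem_HG1 /= ?Ga ?eqxx // !S11chiE ?mem_SG2 /= ?Ga //.
  by rewrite /tensor2_trace /sgnb /= !mul1r !mulr1 !rmorphM /= rmorphN1 !mulrN1 mulrN.
have EA : SX = #|G|%:R * (jj i == i)%:R.
  rewrite -cfdot_irr cfdotE mulrA divff ?cardG_neq0 // mul1r.
  by apply: eq_bigr => a Ga; rewrite jj_val mulrA.
have EB : SY = #|G|%:R * (nu2 xi chi)^*.
  rewrite /nu2 rmorphM fmorphV /= conjC_nat rmorph_sum /= mulrA divff ?cardG_neq0 // mul1r.
  by apply: eq_bigr => a Ga; rewrite rmorphM /= conjCK expgS expg1.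
have hsum : n1%:R + n2%:R = (jj i == i)%:R :> algC.
  rewrite -N1 -N2 E1 E2 EA; field; exact: cardG_neq0.
have hdiff : n1%:R - n2%:R = (nu2 xi chi)^* :> algC.
  rewrite -N1 -N2 E1 E2 EB; field; exact: cardG_neq0.
have nuE : nu2 xi chi = (n1%:R - n2%:R)^* by rewrite hdiff conjCK.
rewrite -natrD in hsum; move/eqP: hsum; rewrite eqr_nat => /eqP hsum.
split => [nij|/eqP eij]; rewrite nuE.
  rewrite eq_sym (negbTE nij) in hsum.
  have [-> ->] : n1 = 0%N /\ n2 = 0%N by lia.
  by rewrite subrr rmorph0.
rewrite -eij eqxx in hsum.
have [[-> ->]|[-> ->]] : (n1 = 1 /\ n2 = 0 \/ n1 = 0 /\ n2 = 1)%N by lia.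
  by left; rewrite subr0 rmorph1.
by right; rewrite sub0r rmorphN rmorph1.
Qed.

Lemma nu_real i : (nu2 xi 'chi_i)^* = nu2 xi 'chi_i.
Proof.
have [H1 H2] := nu_facts i; case: (boolP (i == jj i)) => Hi.
  by case: (H2 Hi) => ->; rewrite ?rmorph1 ?rmorphN1.
by rewrite H1 ?rmorph0.
Qed.

Lemma f_expand h : h \in G ->
  \sum_(u in G) (((u * u)%g == h)%:R * xi u) = \sum_i nu2 xi 'chi_i * 'chi_i h.
Proof.
move=> Gh.
have E1 : forall i, nu2 xi 'chi_i * 'chi_i h =
    #|G|%:R^-1 * \sum_(g in G) (xi g * ('chi_i h * ('chi_i (g * g)%g)^*)).
  move=> i; rewrite -nu_real /nu2 rmorphM fmorphV /= conjC_nat rmorph_sum /=. rewrite -mulrA mulr_suml; congr (_ * _); apply: eq_bigr => g Gg; rewrite rmorphM /= conjCK expgS expg1; ring.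
rewrite (eq_bigr _ (fun i _ => E1 i)) -mulr_sumr exchange_big /=.
have E2 : forall g : gT, g \in G -> \sum_i xi g * ('chi[G]_i h * ('chi[G]_i (g * g)%g)^*)
     = \sum_(c in G) (((h ^ c)%g == (g * g)%g)%:R * xi g).
  move=> g Gg; rewrite -mulr_sumr second_orthogonality_relation ?groupM //.
  by rewrite -mulr_suml cnt_conj // class_sym mulrC.
rewrite (eq_bigr _ E2) exchange_big /=.
have E3 : forall c : gT, c \in G -> \sum_(g in G) (((h ^ c)%g == (g * g)%g)%:R * xi g)
     = \sum_(u in G) (((u * u)%g == h)%:R * xi u).
  move=> c Gc; rewrite (sum_conj _ Gc); apply: eq_bigr => g Gg.
  by rewrite -conjMg (inj_eq (conjg_inj _)) eq_sym cfunJ.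
rewrite (eq_bigr _ E3) sumr_const; set S := (\sum_(u in G) _); rewrite -mulr_natr; field; exact: cardG_neq0.
Qed.
End Main.


Section Keys.
Variables (gT : finGroupType) (G : {group gT}) (xi : 'CF(G)) (Hxi : xi \is a linear_char).
Variables (P : {set Iirr G})
  (HP1 : forall i, i \in P -> 'chi_i != xi * ('chi_i)^*%CF)
  (HP2 : forall i j : Iirr G, 'chi_j = xi * ('chi_i)^*%CF -> i != j ->
           (i \in P) != (j \in P)).

Lemma predA1 i : (('chi_i == xi * ('chi_i)^*%CF) && (nu2 xi 'chi_i == 1)) = (nu2 xi 'chi_i == 1).
Proof.
rewrite A_eq //; have [H1 H2] := nu_facts Hxi i.
case: (boolP (i == jj xi i)) => Hi //=; by rewrite H1 // eq_sym oner_eq0.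
Qed.

Lemma predAm i : (('chi_i == xi * ('chi_i)^*%CF) && (nu2 xi 'chi_i == -1)) = (nu2 xi 'chi_i == -1).
Proof.
rewrite A_eq //; have [H1 H2] := nu_facts Hxi i.
case: (boolP (i == jj xi i)) => Hi //=; by rewrite H1 // eq_sym oppr_eq0 oner_eq0.
Qed.

Lemma key_true h : h \in G ->
  \sum_(u in G) (((u * u)%g == h)%:R * xi u) =
  \sum_(i | ('chi_i == xi * ('chi_i)^*%CF) && (nu2 xi 'chi_i == 1)) 'chi_i h
  - \sum_(i | ('chi_i == xi * ('chi_i)^*%CF) && (nu2 xi 'chi_i == -1)) 'chi_i h.
Proof.
move=> Gh; rewrite f_expand // (bigID (fun i => nu2 xi 'chi_i == 1)) /=.
rewrite (bigID (fun i => nu2 xi 'chi_i == -1) (fun i => nu2 xi 'chi_i != 1)) /=.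
rewrite [X in _ + (_ + X)]big1 ?addr0; last first.
  move=> i /andP[n1 n2]; have [H1 H2] := nu_facts Hxi i.
  case: (boolP (i == jj xi i)) => Hi; last by rewrite H1 // mul0r.
  by case: (H2 Hi) => E; rewrite E eqxx in n1 n2.
congr (_ + _).
  by apply: eq_big => i; [rewrite predA1 | move/eqP->; rewrite mul1r].
rewrite -sumrN; apply: eq_big => i.
  rewrite predAm; case: eqP => // ->; rewrite /= -addr_eq0 (_ : 1 + 1 = 2%:R) ?pnatr_eq0 //.
by move/andP=> [_ /eqP->]; rewrite mulN1r.
Qed.


Lemma one_neq_m1 : (1 == -1 :> algC) = false.
Proof. by rewrite -addr_eq0 (_ : 1 + 1 = 2%:R) ?pnatr_eq0. Qed.

Lemma jj_bij : bijective (jj xi).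
Proof. by exists (jj xi) => i; rewrite jjK. Qed.

Lemma key_false g1 g2 : g1 \in G -> g2 \in G ->
  \sum_(i | ('chi_i == xi * ('chi_i)^*%CF) && (nu2 xi 'chi_i == 1)) ('chi_i g1 * 'chi_i g2)
  + \sum_(i | ('chi_i == xi * ('chi_i)^*%CF) && (nu2 xi 'chi_i == -1)) ('chi_i g1 * 'chi_i g2)
  + \sum_(i in P) ('chi_i g1 * (xi * ('chi_i)^*%CF) g2 + 'chi_i g2 * (xi * ('chi_i)^*%CF) g1)
  = (#|'C_G[g1]%g|%:R * xi g2) *+ (g1 \in g2 ^: G)%g.
Proof.
move=> G1 G2.
pose F i := 'chi[G]_i g1 * 'chi_(jj xi i) g2.
have EF : \sum_i F i = (#|'C_G[g1]%g|%:R * xi g2) *+ (g1 \in g2 ^: G)%g.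
  rewrite -mulrnAl -second_orthogonality_relation // mulr_suml.
  by apply: eq_bigr => i _; rewrite /F jj_val //; ring.
rewrite -EF [RHS](bigID (fun i => i == jj xi i)) /=.
congr (_ + _).
  rewrite [RHS](bigID (fun i => nu2 xi 'chi_i == 1) (fun i => i == jj xi i)) /=.
  congr (_ + _); apply: eq_big => i.
  - by rewrite A_eq.
  - by rewrite A_eq // => /andP[/eqP Hi _]; rewrite /F -Hi.
  - rewrite A_eq //; case: (boolP (i == jj xi i)) => Hi //=.
    have [_ H2] := nu_facts Hxi i; case: (H2 Hi) => ->; rewrite ?eqxx /=.
      by rewrite one_neq_m1.
    by rewrite eq_sym one_neq_m1.
  - by rewrite A_eq // => /andP[/eqP Hi _]; rewrite /F -Hi.
rewrite [RHS](bigID (fun i => i \in P)) /= big_split /=.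
have inP_neq i : i \in P -> i != jj xi i by move=> Pi; rewrite -A_eq // HP1.
congr (_ + _).
  apply: eq_big => i; first by case: (boolP (i \in P)) => Pi; rewrite ?andbT ?andbF ?inP_neq.
  by move=> _; rewrite /F chi_jj.
rewrite (reindex (jj xi)) /=; last by exists (jj xi) => i _; rewrite jjK.
apply: eq_big => i.
  have Hn : (i != jj xi i) -> (i \in P) != (jj xi i \in P) := HP2 (chi_jj Hxi i).
  case: (boolP (jj xi i \in P)) => Pj.
    have nij : i != jj xi i by rewrite eq_sym; move: (inP_neq _ Pj); rewrite jjK.
    by move: (Hn nij); rewrite Pj nij; case: (i \in P).
  case: (boolP (i == jj xi i)) => //= nij.
  by move: (Hn nij); rewrite (negbTE Pj); case: (i \in P).
by move=> _; rewrite /F -(chi_jj Hxi) (jjK Hxi) mulrC.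
Qed.
End Keys.

End Helpers.
Import Helpers.

Theorem proposition3p4 (gT : finGroupType) (G : {group gT}) (xi : 'CF(G))
  (Hxi : xi \is a linear_char)
  (P : {set Iirr G})
  (HP1 : forall i, i \in P -> 'chi_i != xi * ('chi_i)^*%CF)
  (HP2 : forall i j : Iirr G, 'chi_j = xi * ('chi_i)^*%CF -> i != j ->
           (i \in P) != (j \in P)) :
  'Ind[SG2 G] (xi_tensor xi (fun _ => 1)) =
    \sum_(i : Iirr G | ('chi_i == xi * ('chi_i)^*%CF) && (nu2 xi 'chi_i == 1))
        S2chi 'chi_i
    + \sum_(i : Iirr G | ('chi_i == xi * ('chi_i)^*%CF) && (nu2 xi 'chi_i == -1))
        S11chi 'chi_i
    + \sum_(i in P) outer_ind 'chi_i (xi * ('chi_i)^*%CF)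
  /\
  'Ind[SG2 G] (xi_tensor xi sgnb) =
    \sum_(i : Iirr G | ('chi_i == xi * ('chi_i)^*%CF) && (nu2 xi 'chi_i == 1))
        S11chi 'chi_i
    + \sum_(i : Iirr G | ('chi_i == xi * ('chi_i)^*%CF) && (nu2 xi 'chi_i == -1))
        S2chi 'chi_i
    + \sum_(i in P) outer_ind 'chi_i (xi * ('chi_i)^*%CF).
Proof.
have He1 : forall s, (fun _ : bool => 1 : algC) s = epsb false s by [].
have He2 : forall s, sgnb s = epsb true s by case.
split; apply/cfunP => x; (have [Gx|nGx] := boolP (x \in SG2 G); last by rewrite !cfun0);
  case: x Gx => [[g1 g2] s] Gx; move: (Gx); rewrite mem_SG2 /= => /andP[G1 G2];
  rewrite [RHS]cfunE [X in _ = X + _]cfunE !sum_cfunE.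
- case: s Gx => Gx.
  + rewrite (Ind_swap Hxi He1) // mul1r (key_true Hxi) ?groupM //.
    rewrite [X in _ = _ + X]big1 ?addr0 => [|i _]; last by rewrite outer_E.
    rewrite -sumrN; congr (_ + _); apply: eq_bigr => i _.
      by rewrite S2chiE.
    by rewrite S11chiE // /tensor2_trace /sgnb /= mulrN1.
  + rewrite (Ind_base Hxi He1) // -(key_false Hxi HP1 HP2) //.
    congr (_ + _ + _); apply: eq_bigr => i _.
    * by rewrite S2chiE.
    * by rewrite S11chiE // /tensor2_trace /sgnb /= mulr1.
    * by rewrite outer_E.
- case: s Gx => Gx.
  + rewrite (Ind_swap Hxi He2) // (key_true Hxi) ?groupM //.
    rewrite [X in _ = _ + X]big1 ?addr0 => [|i _]; last by rewrite outer_E.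
    rewrite /sgnb mulrBr !mulN1r opprK -sumrN; congr (_ + _); apply: eq_bigr => i _.
      by rewrite S11chiE // /tensor2_trace /sgnb /= mulrN1.
    by rewrite S2chiE.
  + rewrite (Ind_base Hxi He2) // -(key_false Hxi HP1 HP2) //.
    congr (_ + _ + _); apply: eq_bigr => i _.
    * by rewrite S11chiE // /tensor2_trace /sgnb /= mulr1.
    * by rewrite S2chiE.
    * by rewrite outer_E.
Qed.
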